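(* Let $u\in\mathcal{F}_\mathrm{e}$ and let $u=u_1+u_2$ with $u_1\in\mathcal{F}^{(s)}_\mathrm{e}$ and $u_2\in\mathcal{G}^{(s)}$. Then $u'=u_2'$ a.e. on $F$.
   Context: Let $m$ be Lebesgue measure. $(\mathcal{E},\mathcal{F})=(\frac12\mathbf{D},H^1(\mathbf{R}))$, $\mathcal{E}(u,v)=\frac12\int u'v'dx$, with extended space $\mathcal{F}_\mathrm{e}=\{u\text{ absolutely continuous},\ u'\in L^2(\mathbf{R})\}$. Let $s$ be strictly increasing, absolutely continuous, with $s'\in\{0,1\}$ a.e. Let $(\mathcal{E}^{(s)},\mathcal{F}^{(s)})$ be given by $\mathcal{F}^{(s)}=\{u\in L^2:u\ll s,\int(du/ds)^2ds<\infty\}$ and $\mathcal{E}^{(s)}(u,v)=\frac12\int\frac{du}{ds}\frac{dv}{ds}ds$, with extended space $\mathcal{F}^{(s)}_\mathrm{e}=\{u\ll s:\int(du/ds)^2ds<\infty,\ u(\infty)=0\text{ if }s(\infty)<\infty,\ u(-\infty)=0\text{ if }s(-\infty)>-\infty\}$. Let $G=\{s'=1\}$, $F=\mathbf{R}\setminus G$, and assume $G$ is open, $m(F)>0$ and $F$ has no isolated points. Define $\mathcal{G}^{(s)}=\{u\in\mathcal{F}_\mathrm{e}:\mathcal{E}(u,v)=0\ \forall v\in\mathcal{F}^{(s)}_\mathrm{e}\}$. *)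

(* Defs.v *)
From HB Require Import structures.
From mathcomp Require Import all_boot all_order all_algebra.
From mathcomp Require Import all_classical all_reals all_analysis.
Set Implicit Arguments. Unset Strict Implicit. Unset Printing Implicit Defensive.
Import Order.TTheory GRing.Theory Num.Theory.
Import numFieldNormedType.Exports.
Local Open Scope classical_set_scope.
Local Open Scope ring_scope.

Definition abs_cont_wrt {R : realType} (s f : R -> R) (a b : R) : Prop :=
  forall eps : R, 0 < eps -> exists2 delta : R, 0 < delta &
    forall (n : nat) (x y : 'I_n -> R),
      (forall i, a <= x i /\ x i <= y i /\ y i <= b) ->
      (forall i j, i != j -> y i <= x j \/ y j <= x i) ->
      \sum_(i < n) (s (y i) - s (x i)) < delta ->
      \sum_(i < n) `|f (y i) - f (x i)| < eps.

Definition abs_cont {R : realType} (f : R -> R) : Prop :=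
  forall a b : R, abs_cont_wrt id f a b.

Definition abs_cont_s {R : realType} (s u : R -> R) : Prop :=
  forall a b : R, abs_cont_wrt s u a b.

Definition leb {R : realType} := (@lebesgue_measure R).

(* extended Dirichlet space F_e of (1/2 D, H^1(R)) *)
Definition Fe {R : realType} (u : R -> R) : Prop :=
  abs_cont u /\ measurable_fun setT (derive1 u) /\
  (\int[leb]_x ((derive1 u x) ^+ 2)%:E < +oo)%E.

Definition Eform {R : realType} (u v : R -> R) : \bar R :=
  ((2^-1)%:E * \int[leb]_x ((derive1 u x * derive1 v x)%:E))%E.

(* extended space F^(s)_e : u << s, with du/ds = h (density of du w.r.t. the
   Lebesgue-Stieltjes measure ds), \int (du/ds)^2 ds < oo, and the boundary
   conditions at +-oo *)
Definition Fse {R : realType} (s : cumulative R R) (u : R -> R) : Prop :=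
  abs_cont_s s u /\
  (exists h : R -> R,
     measurable_fun setT h /\
     (forall a b : R, a < b ->
        ((u b - u a)%:E =
        \int[lebesgue_stieltjes_measure s]_(x in `]a, b]) (h x)%:E)%E) /\
     (\int[lebesgue_stieltjes_measure s]_x ((h x) ^+ 2)%:E < +oo)%E) /\
  ((exists M : R, forall x, s x <= M) -> u x @[x --> +oo] --> 0) /\
  ((exists M : R, forall x, M <= s x) -> u x @[x --> -oo] --> 0).

Definition Gs {R : realType} (s : cumulative R R) (u : R -> R) : Prop :=
  Fe u /\ forall v, Fse s v -> Eform u v = 0%E.

Definition Gset {R : realType} (s : R -> R) : set R :=
  [set x | derivable s x 1 /\ derive1 s x = 1].

(* Main.v *)
Require Import Defs.
From HB Require Import structures.
From mathcomp Require Import all_boot all_order all_algebra.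
From mathcomp Require Import all_classical all_reals all_analysis.
From mathcomp Require Import ring lra.
Import Order.TTheory GRing.Theory Num.Theory.
Import numFieldNormedType.Exports.
Local Open Scope classical_set_scope.
Local Open Scope ring_scope.


Definition quot {R : realType} (f : R -> R) (x : R) := fun h : R => h^-1 *: (f (h + x) - f x).


Lemma lim_add0 (R : realType) (g e : R -> R) :
  e @ 0^' --> 0 -> lim ((g \+ e) @ 0^') = lim (g @ 0^').
Proof.
move=> e0; rewrite /lim /lim_in; congr get; apply: funext => l; apply: propext; split => H.
- have -> : g = (g \+ e) \- e by apply: funext => h /=; rewrite addrK.
  by rewrite -[l]subr0; apply: cvgB.
- by rewrite -[l]addr0; apply: cvgD.
Qed.

Lemma derivable_quot (R : realType) (s : R -> R) x :
  derivable s x 1 -> quot s x @ 0^' --> derive1 s x.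
Proof.
move=> ds; rewrite derive1E.
have -> : quot s x = (fun h => h^-1 *: ((s \o shift x) (h *: 1) - s x)).
  by apply: funext => h /=; rewrite /quot /= -[h *: 1]/(h * 1) mulr1.
exact: ds.
Qed.

Lemma sum_bound (R : realType) (s u : R -> R) (X Y r : nat -> R) (a b eps delta eta c : R) :
  0 < c -> 0 < eps -> 0 <= eta -> eta * (eps / c + 1) < delta ->
  (forall (n : nat) (x y : 'I_n -> R),
      (forall i, a <= x i /\ x i <= y i /\ y i <= b) ->
      (forall i j, i != j -> y i <= x j \/ y j <= x i) ->
      \sum_(i < n) (s (y i) - s (x i)) < delta ->
      \sum_(i < n) `|u (y i) - u (x i)| < eps) ->
  (forall k, a <= X k /\ X k <= Y k /\ Y k <= b) ->
  (forall k k', k != k' -> Y k <= X k' \/ Y k' <= X k) ->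
  (forall k, s (Y k) - s (X k) <= eta * r k) ->
  (forall k, c * r k <= `|u (Y k) - u (X k)|) ->
  (forall k, 0 <= r k <= 1) ->
  forall N, \sum_(k < N) r k < eps / c.
Proof.
move=> c0 e0 eta0 etad hac hab hdisj hs hu hr.
elim=> [|N IH]; first by rewrite big_ord0 divr_gt0.
have hS : \sum_(k < N.+1) r k <= eps / c + 1.
  rewrite big_ord_recr /= lerD //; [exact: ltW | by case/andP: (hr N)].
have hsum : \sum_(i < N.+1) `|u (Y i) - u (X i)| < eps.
  apply: (hac N.+1 (fun i => X i) (fun i => Y i)) => //.
    move=> i j ij; apply: hdisj; exact: ij.
  apply: (le_lt_trans _ etad).
  apply: (@le_trans _ _ (\sum_(i < N.+1) eta * r i)); first by apply: ler_sum => i _; exact: hs.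
  by rewrite -mulr_sumr ler_wpM2l.
rewrite ltr_pdivlMr // mulrC mulr_sumr.
apply: (le_lt_trans _ hsum).
by apply: ler_sum => i _; exact: hu.
Qed.

Lemma mem_cb (R : realType) (x r y : R) : 0 < r ->
  closed_ball x r y <-> x - r <= y <= x + r.
Proof.
move=> r0; rewrite closed_ball_itv //= in_itv /=; done.
Qed.

Lemma cover_data (R : realType) (s u : R -> R) (M c eta : R) (A : set R) :
  (forall x y, x <= y -> s x <= s y) ->
  0 < M -> 0 < c -> 0 < eta ->
  (forall x, A x -> `|x| < M /\ forall rho, 0 < rho -> exists h,
      [/\ 0 < `|h| , `|h| < rho, s (x + `|h|) - s (x - `|h|) <= eta * `|h| &
          c * `|h| < `|u (h + x) - u x|]) ->
  exists (C X Y r : nat -> R),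
    [/\ (forall k, -M-1 <= X k /\ X k <= Y k /\ Y k <= M+1),
     (forall k k', k != k' -> Y k <= X k' \/ Y k' <= X k),
     (forall k, s (Y k) - s (X k) <= eta * r k /\ c * r k <= `|u (Y k) - u (X k)|),
     (forall k, 0 <= r k <= 1) &
     A `<=` \bigcup_k closed_ball (C k) (5 * r k)].
Proof.
move=> snd M0 c0 eta0 hA.
pose V : set (R * R) := fun i => [/\ 0 < i.2, i.2 <= 1, -M-1 <= i.1 - i.2,
   i.1 + i.2 <= M+1 & s (i.1+i.2) - s (i.1 - i.2) <= eta * i.2 /\
   exists p : R * R, [/\ i.1 - i.2 <= p.1, p.1 <= p.2, p.2 <= i.1 + i.2 &
                        c * i.2 <= `|u p.2 - u p.1|]].
pose B : R * R -> set R := fun i => ball i.1 (if 0 < i.2 then i.2 else 1).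
have radB i : (radius (B i))%:num = if 0 < i.2 then i.2 else 1.
  by rewrite radius_ball_num //; case: ifP => // /ltW.
have hball i : is_ball (B i) by exact: is_ball_ball.
have hpos i : 0 < (radius (B i))%:num by rewrite radB; case: ifP.
have hVr i : V i -> (radius (B i))%:num <= 1.
  by case=> i0 i1 _ _ _; rewrite radB i0.
have [D [cD DV tD covD]] := vitali_lemma_infinite_cover hball hpos hVr.
have clB i : 0 < i.2 -> closure (B i) = closed_ball i.1 i.2.
  by move=> i0; rewrite /B i0.
have AV : A `<=` cover V (closure \o B).
  move=> x Ax; have [xM /(_ 1 ltr01) [h [h0 h1 hs hu]]] := hA x Ax.
  exists (x, `|h|).
    split => //=; [exact: ltW| | |].
    - move: xM h1; rewrite ltr_norml => /andP[? ?] ?; lra.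
    - move: xM h1; rewrite ltr_norml => /andP[? ?] ?; lra.
    - split => //; have [hg|hl] := leP 0 h.
      + exists (x, h + x); move: hu; rewrite /= (ger0_norm hg) => hu.
        split; [lra|lra|lra|exact: ltW].
      + exists (h + x, x); move: hu; rewrite /= (ltr0_norm hl) => hu.
        split; [lra|lra|lra|rewrite distrC; exact: ltW].
  by rewrite /= clB //=; apply: subset_closure; apply: ballxx.
have /countable_injP[f finj] := cD.
pose pick k := xget (0, 0) [set i | D i /\ f i = k].
pose Dk k := D (pick k) /\ f (pick k) = k.
pose wit (i : R * R) := xget (0, 0) [set p : R * R | [/\ i.1 - i.2 <= p.1, p.1 <= p.2,
   p.2 <= i.1 + i.2 & c * i.2 <= `|u p.2 - u p.1|]].
have witP i : V i -> [/\ i.1 - i.2 <= (wit i).1, (wit i).1 <= (wit i).2,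
   (wit i).2 <= i.1 + i.2 & c * i.2 <= `|u (wit i).2 - u (wit i).1|].
  case=> _ _ _ _ [_ ex]; exact: (@xgetPex _ (0, 0) _ ex).
pose X k := if pselect (Dk k) then (wit (pick k)).1 else -M-1.
pose Y k := if pselect (Dk k) then (wit (pick k)).2 else -M-1.
pose r k := if pselect (Dk k) then (pick k).2 else 0.
pose C k := (pick k).1.
have Vk k : Dk k -> V (pick k) by case=> /DV.
exists C, X, Y, r; split.
- move=> k; rewrite /X /Y; destruct (pselect (Dk k)) as [dk|ndk]; rewrite /=; last by split; [lra|split; lra].
  have [i0 i1 i2 i3 _] := Vk k dk; have [w1 w2 w3 _] := witP _ (Vk k dk).
  by split; [lra|split; lra].
- move=> k k' kk'; rewrite /X /Y.
  destruct (pselect (Dk k)) as [dk|ndk]; destruct (pselect (Dk k')) as [dk'|ndk']; rewrite /=.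
  + have [i0 i1 i2 i3 _] := Vk k dk; have [w1 w2 w3 _] := witP _ (Vk k dk).
    have [j0 j1 j2 j3 _] := Vk k' dk'; have [v1 v2 v3 _] := witP _ (Vk k' dk').
    have ij : pick k <> pick k'.
      by move=> eij; move: kk'; rewrite -dk.2 -dk'.2 eij eqxx.
    case: (leP (wit (pick k)).2 (wit (pick k')).1) => h1; first by left.
    case: (leP (wit (pick k')).2 (wit (pick k)).1) => h2; first by right.
    exfalso; apply: ij; apply: (tD _ _ dk.1 dk'.1).
    case: (leP (wit (pick k)).1 (wit (pick k')).1) => h3.
    * exists (wit (pick k')).1; split; rewrite /= clB // mem_cb //; apply/andP; split; lra.
    * exists (wit (pick k)).1; split; rewrite /= clB // mem_cb //; apply/andP; split; lra.
  + have [i0 i1 i2 i3 _] := Vk k dk; have [w1 w2 w3 _] := witP _ (Vk k dk).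
    right; lra.
  + have [i0 i1 i2 i3 _] := Vk k' dk'; have [w1 w2 w3 _] := witP _ (Vk k' dk').
    left; lra.
  + by left.
- move=> k; rewrite /X /Y /r; destruct (pselect (Dk k)) as [dk|ndk]; rewrite /=; last by rewrite !subrr mulr0 normr0 mulr0.
  have [i0 i1 i2 i3 [hs _]] := Vk k dk; have [w1 w2 w3 w4] := witP _ (Vk k dk).
  split => //; apply: le_trans hs; apply: lerB; apply: snd; lra.
- move=> k; rewrite /r; destruct (pselect (Dk k)) as [dk|ndk]; rewrite /=; last by rewrite lexx ler01.
  by have [i0 i1 _ _ _] := Vk k dk; rewrite ltW.
- move=> x Ax; have [j Dj /= hx] := covD x (AV x Ax).
  have ex : exists i, D i /\ f i = f j by exists j.
  have dk : Dk (f j) := @xgetPex _ (0, 0) _ ex.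
  have pj : pick (f j) = j.
    by apply: finj; [rewrite inE; exact: dk.1|rewrite inE|exact: dk.2].
  exists (f j) => //; rewrite /r /C.
  destruct (pselect (Dk (f j))) as [dk'|ndk]; last by [].
  rewrite /= pj; have [j0 _ _ _ _] := DV j Dj.
  by move: hx; rewrite /B j0 scale_ballE.
Qed.

Lemma A_null (R : realType) (s u : R -> R)
  (snd : forall x y, x <= y -> s x <= s y)
  (hac : forall a b, abs_cont_wrt s u a b) (M c : R) (A : set R) :
  0 < M -> 0 < c ->
  (forall x, A x -> `|x| < M /\ forall eta, 0 < eta -> forall rho, 0 < rho -> exists h,
      [/\ 0 < `|h| , `|h| < rho, s (x + `|h|) - s (x - `|h|) <= eta * `|h| &
          c * `|h| < `|u (h + x) - u x|]) ->
  (@lebesgue_measure R A = 0)%E.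
Proof.
move=> M0 c0 hA.
have key : forall eps, 0 < eps -> (lebesgue_measure A <= (10 * (eps / c))%:E)%E.
  move=> eps e0.
  have [delta d0 hd] := hac (- M - 1) (M + 1) eps e0.
  pose eta := delta / (2 * (eps / c + 1)).
  have ec0 : 0 < eps / c + 1 by rewrite addr_gt0 // divr_gt0.
  have eta0 : 0 < eta by rewrite /eta divr_gt0 // mulr_gt0.
  have etad : eta * (eps / c + 1) < delta.
    rewrite /eta invfM mulrA -mulrA mulVf ?gt_eqF // mulr1.
    by rewrite gtr_pMr // invf_lt1 // ltr1n.
  have hA' : forall x, A x -> `|x| < M /\ forall rho, 0 < rho -> exists h,
      [/\ 0 < `|h| , `|h| < rho, s (x + `|h|) - s (x - `|h|) <= eta * `|h| &
          c * `|h| < `|u (h + x) - u x|].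
    by move=> x /hA [xM H]; split => // rho rho0; exact: H.
  have [C [X [Y [r [hab hdisj hsu hr hcov]]]]] := @cover_data _ s u M c eta A snd M0 c0 eta0 hA'.
  have hsum := @sum_bound _ s u X Y r _ _ eps delta eta c c0 e0 (ltW eta0) etad hd hab hdisj
     (fun k => (hsu k).1) (fun k => (hsu k).2) hr.
  apply: (le_trans (le_outer_measure (@lebesgue_measure R) _ _ hcov)).
  apply: (le_trans (outer_measure_sigma_subadditive (@lebesgue_measure R) _)).
  have r0 k : 0 <= r k by case/andP: (hr k).
  rewrite (eq_eseriesr (fun k _ => lebesgue_measure_closed_ball (C k) (mulr_ge0 (ler0n _ 5) (r0 k)))).
  apply: lime_le.
    by apply: is_cvg_nneseries => n _ _; rewrite lee_fin mulrn_wge0 // mulr_ge0.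
  apply: nearW => n /=.
  rewrite sumEFin lee_fin big_mkord.
  have -> : \sum_(i < n) 5 * r i *+ 2 = 10 * \sum_(i < n) r i.
    by rewrite mulr_sumr; apply: eq_bigr => k _; rewrite -mulr_natl mulrA -natrM.
  by rewrite ler_wpM2l // ltW.
apply/eqP; rewrite eq_le measure_ge0 andbT.
apply/lee_addgt0Pr => e e0; rewrite add0e.
have := key (e * c / 10); rewrite !mulr_gt0 ?invr_gt0 ?ltr0n //.
move=> /(_ isT); congr (_ <= _)%E; congr (_%:E).
by field; rewrite ?gt_eqF // ltr0n.
Qed.

Lemma near0P (R : realType) (P : R -> Prop) :
  (\forall t \near 0^', P t) -> exists2 rho : R, 0 < rho & forall t, t != 0 -> `|t| < rho -> P t.
Proof.
rewrite near_withinE => /nbhs_ballP[rho rho0 H]; exists rho => // t t0 tr.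
by apply: H => //; rewrite /ball /= sub0r normrN.
Qed.

Lemma quot_small (R : realType) (s : R -> R) x (eta : R) : 0 < eta ->
  quot s x @ 0^' --> 0 ->
  exists2 rho : R, 0 < rho & forall t, `|t| < rho -> `|s (t + x) - s x| <= eta * `|t|.
Proof.
move=> eta0 /cvgrPdist_lt /(_ eta eta0) /near0P [rho rho0 H].
exists rho => // t tr; have [->|t0] := eqVneq t 0.
  by rewrite add0r subrr !normr0 mulr0.
have := H t t0 tr; rewrite sub0r normrN /quot normrZ normfV.
rewrite ltr_pdivrMl ?normr_gt0 // => /ltW; by rewrite mulrC.
Qed.

Lemma bad_negligible' (R : realType) (s u : R -> R)
  (s_nd : forall x y, x <= y -> s x <= s y)
  (hac : forall a b, abs_cont_wrt s u a b) :
  (@lebesgue_measure R).-negligible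
    [set x | quot s x @ 0^' --> 0 /\ ~ (quot u x @ 0^' --> 0)].
Proof.
pose c (m : nat) : R := (m.+1%:R)^-1.
have c0 m : 0 < c m by rewrite /c invr_gt0.
pose A m := [set x : R | `|x| < m.+1%:R /\ quot s x @ 0^' --> 0 /\
   forall rho : R, 0 < rho -> exists h : R, [/\ 0 < `|h|, `|h| < rho & c m * `|h| < `|u (h + x) - u x|]].
have An m : lebesgue_measure (A m) = 0%E.
  apply: (@A_null _ s u s_nd hac m.+1%:R (c m) (A m)) => //.
  move=> x [xM [qs hu]]; split => // eta eta0 rho rho0.
  have [r0 r00 Hs] := @quot_small _ s x (eta / 2) (divr_gt0 eta0 (ltr0n _ 2)) qs.
  have hmin : 0 < Order.min rho r0 by rewrite lt_min rho0 r00.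
  have [h [h0 h1 h2]] := hu (Order.min rho r0) hmin.
  have [hr hr0] : `|h| < rho /\ `|h| < r0 by move: h1; rewrite lt_min => /andP.
  exists h; split => //.
  have e1 := Hs `|h|; have e2 := Hs (- `|h|).
  rewrite normrN normr_id in e2; rewrite normr_id in e1.
  have {}e1 := e1 hr0; have {}e2 := e2 hr0.
  have f1 := ler_norm (s (`|h| + x) - s x).
  have f2 : s x - s (- `|h| + x) <= `|s (- `|h| + x) - s x| by rewrite distrC ler_norm.
  have -> : eta * `|h| = eta / 2 * `|h| + eta / 2 * `|h| by field.
  rewrite [x + _]addrC [x - _]addrC.
  lra.
have ZA : [set x | quot s x @ 0^' --> 0 /\ ~ (quot u x @ 0^' --> 0)] `<=` \bigcup_m A m.
  move=> x [qs nqu]; apply: contrapT => nA; apply: nqu.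
  apply/cvgrPdist_lt => eps e0.
  have ei0 : 0 < eps^-1 by rewrite invr_gt0.
  pose m := Num.bound (`|x| + eps^-1).
  have hm : `|x| + eps^-1 < m%:R := archi_boundP (addr_ge0 (normr_ge0 x) (ltW ei0)).
  have hm1 : m%:R < m.+1%:R :> R by rewrite ltr_nat.
  have nAm : ~ A m x by move=> Am; apply: nA; exists m.
  have : ~ (forall rho : R, 0 < rho -> exists h : R,
      [/\ 0 < `|h|, `|h| < rho & c m * `|h| < `|u (h + x) - u x|]).
    move=> H; apply: nAm; split; [|by split].
    have := normr_ge0 x; lra.
  move=> /existsNP [rho /not_implyP [rho0 /forallNP H]].
  rewrite near_withinE; apply/nbhs_ballP; exists rho => //= t.
  rewrite /ball /= sub0r normrN => tr t0.
  have t0' : 0 < `|t| by rewrite normr_gt0.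
  have hd : `|u (t + x) - u x| <= c m * `|t|.
    rewrite leNgt; apply/negP => hlt; apply: (H t); split => //.
  have hc : c m < eps.
    rewrite /c -(invrK eps) ltf_pV2 ?posrE ?ltr0n //.
    have := normr_ge0 x; lra.
  rewrite sub0r normrN /quot normrZ normfV.
  rewrite ltr_pdivrMl // (le_lt_trans hd) // mulrC ltr_pM2l //.
apply/negligible_outer_measure.
change (lebesgue_measure [set x | quot s x @ 0^' --> 0 /\ ~ (quot u x @ 0^' --> 0)] = 0%E).
apply/eqP; rewrite eq_le measure_ge0 andbT.
apply: (le_trans (le_outer_measure (@lebesgue_measure R) _ _ ZA)).
apply: (le_trans (outer_measure_sigma_subadditive (@lebesgue_measure R) _)).
by rewrite eseries0 // => m _ _; exact: An.
Qed.

Theorem mainTheorem9 (R : realType) (s : cumulative R R)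
  (s_incr : {mono s : x y / x < y})
  (s_ac : abs_cont s)
  (s_deriv : {ae leb, forall x, derivable s x 1 /\ (derive1 s x = 0 \/ derive1 s x = 1)})
  (G_open : open (Gset s))
  (F_pos : (0 < leb (~` Gset s))%E)
  (F_perfect : forall x, (~` Gset s) x -> forall e : R, 0 < e ->
       exists y, (~` Gset s) y /\ y != x /\ `|y - x| < e)
  (u u1 u2 : R -> R)
  (hu : Fe u) (hu1 : Fse s u1) (hu2 : Gs s u2)
  (hdec : forall x, u x = u1 x + u2 x) :
  {ae leb, forall x, (~` Gset s) x -> derive1 u x = derive1 u2 x}.
Proof.
have s_nd : forall x y, x <= y -> s x <= s y.
  by move=> x y; rewrite le_eqVlt => /predU1P[->//|/[dup] xy]; rewrite -s_incr => /ltW.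
have Zn := @bad_negligible' _ _ _ s_nd hu1.1.
apply: (negligibleS _ (negligibleU s_deriv Zn)) => x /= nH.
have [Ps|nPs] := pselect (derivable s x 1 /\ (derive1 s x = 0 \/ derive1 s x = 1)); [right|left]; last first.
  by apply: nPs.
have notG : ~ Gset s x.
  by apply: contra_not nH => G; move=> /(_ G).
have neq : derive1 u x <> derive1 u2 x.
  by apply: contra_not nH => e _.
case: Ps => ds [d0|d1]; last by exfalso; apply: notG.
split; first by have := @derivable_quot _ s x ds; rewrite d0.
move=> q1; apply: neq.
have -> : derive1 u x = lim (quot u x @ 0^') by [].
have -> : quot u x = quot u2 x \+ quot u1 x.
  apply: funext => h /=.
  by rewrite /quot !hdec -scalerDr; congr (_ *: _); rewrite opprD addrACA addrC.
exact: lim_add0.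
Qed.
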